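(* Let $a_1,\dots,a_n$ be nonzero integers, consider the equation $a_1x_1+\cdots+a_nx_n=0$, and for $1\le l\le n$ let $$S_l=-\frac{\left(\sum_{i=1}^n a_i\right)-a_l}{a_l}.$$ Suppose there exists an upper triangular $m\times m$ matrix $(c_{i,j})$ whose entries $c_{i,j}$ with $i\le j$ are all positive, each equal to $S_l$ for some $1\le l\le n$, and which has the linkage property. Then the equation is strongly $m$-regular; that is, for every finite collection of inequalities $A_{j,1}x_1+\cdots+A_{j,n}x_n\neq0$ ($1\le j\le k$, $A_{j,i}\in\mathbb{Z}$), none of which is a multiple of the equation, the system consisting of the equation and these inequalities is $m$-regular.
   Context: An upper triangular $m\times m$ matrix $(c_{i,j})$ (with $c_{i,j}=0$ for $i>j$) has the linkage property if for every integer $i$ with $1\le i\le m-1$ and every $j$ with $i<j\le m$, one has $c_{1,i}\cdot c_{i+1,j}=c_{1,j}$. An inequality $A_{1}x_1+\cdots+A_nx_n\neq0$ is a multiple of the equation if $(A_1,\dots,A_n)$ is a scalar multiple of $(a_1,\dots,a_n)$. A system of the equation together with finitely many inequalities is $m$-regular if for every coloring of the positive integers with $m$ colors there exist positive integers $x_1,\dots,x_n$, all of the same color, satisfying the equation and all inequalities. The equation is strongly $m$-regular if adding any finite set of integer-coefficient inequalities, none a multiple of the equation, yields an $m$-regular system. *)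

(* Defs.v *)
From mathcomp Require Import all_boot all_order all_algebra.
Set Implicit Arguments. Unset Strict Implicit. Unset Printing Implicit Defensive.
Import Order.TTheory GRing.Theory Num.Theory.
Local Open Scope ring_scope.

Definition S_coef (n : nat) (a : 'I_n -> int) (l : 'I_n) : rat :=
  - (((\sum_(i < n) a i) - a l)%:~R) / (a l)%:~R.

(* Upper triangular (entries below the diagonal vanish); indices are
   0-based ordinals, so the paper's c_{i,j} is c (i-1) (j-1). *)
Definition upper_triangular (m : nat) (c : 'M[rat]_m) : Prop :=
  forall i j : 'I_m, (j < i)%N -> c i j = 0.

Definition linkage (m : nat) (c : 'M[rat]_m) : Prop :=
  forall i0 i j k : 'I_m, val i0 = 0%N -> val j = (val i).+1 ->
    (val i < val k)%N -> c i0 i * c j k = c i0 k.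

Definition lin_form (n : nat) (A : 'I_n -> int) (x : 'I_n -> nat) : int :=
  \sum_(i < n) A i * (x i)%:Z.

Definition is_multiple (n : nat) (A a : 'I_n -> int) : Prop :=
  exists lam : rat, forall i, (A i)%:~R = lam * (a i)%:~R.

Definition m_regular_system (n m k : nat) (a : 'I_n -> int)
    (A : 'I_k -> 'I_n -> int) : Prop :=
  forall col : nat -> 'I_m,
    exists x : 'I_n -> nat,
      (forall i, (0 < x i)%N) /\
      (forall i j, col (x i) = col (x j)) /\
      lin_form a x = 0 /\
      (forall j, lin_form (A j) x != 0).

Definition strongly_m_regular (n m : nat) (a : 'I_n -> int) : Prop :=
  forall (k : nat) (A : 'I_k -> 'I_n -> int),
    (forall j, ~ is_multiple (A j) a) -> m_regular_system m a A.

(* Main.v *)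
Require Import Defs.
From mathcomp Require Import all_boot all_order all_algebra.
Import Order.TTheory GRing.Theory Num.Theory.
Local Open Scope ring_scope.
From mathcomp Require Import zify ring lra.
Set Implicit Arguments. Unset Strict Implicit. Unset Printing Implicit Defensive.

Local Close Scope ring_scope.
Definition mono_ap (T : Type) (chi : nat -> T) (k N : nat) :=
  exists a d, 0 < d /\ d <= N /\ a + k * d < N /\
    forall j, j <= k -> chi (a + j * d) = chi a.

Definition vdW_stmt k := forall T : finType, exists N, forall chi : nat -> T, mono_ap chi k N.

Lemma vdW0 : vdW_stmt 0.
Proof.
move=> T; exists 1 => chi; exists 0, 1; do 3! split => //.
by move=> j; rewrite leqn0 => /eqP ->.
Qed.

Lemma inj_surj (T : finType) (g : nat -> T) :
  (forall i i', i < #|T| -> i' < #|T| -> g i = g i' -> i = i') ->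
  forall t, exists2 i, i < #|T| & g i = t.
Proof.
move=> Hg t.
have hinj : injective (fun i : 'I_#|T| => g i).
  by move=> i i' /Hg h; apply/val_inj/h.
have := inj_card_bij hinj; rewrite card_ord => /(_ (leqnn _)) [h1 _ h2].
by exists (h1 t) => //; rewrite h2.
Qed.

Lemma blkL Ns b M x : x < Ns -> b < M -> Ns * b + x < Ns * (2 * M).
Proof.
move=> xN bM; have h1 : b + 1 <= 2 * M by lia.
apply: leq_trans (leq_mul (leqnn Ns) h1).
rewrite mulnDr muln1; lia.
Qed.

Lemma blkF Ns b f' k e M : f' < Ns -> b + k * e < M -> e <= M ->
  Ns * b + f' + k.+1 * (Ns * e) < Ns * (2 * M).
Proof.
move=> fN bM eM.
have h1 : b + k.+1 * e + 1 <= 2 * M by rewrite mulSn; lia.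
have h2 := leq_mul (leqnn Ns) h1.
apply: leq_trans h2.
have -> : Ns * (b + k.+1 * e + 1) = Ns * b + Ns + k.+1 * (Ns * e) by ring.
lia.
Qed.

Lemma leN x Ns M : x <= Ns -> 0 < M -> x <= Ns * (2 * M).
Proof. move=> h hM; apply: (leq_trans h); rewrite -{1}(muln1 Ns) leq_mul2l; lia. Qed.

Lemma apbnd a j k d : j <= k -> a + j * d <= a + k * d.
Proof. by move=> h; rewrite leq_add2l leq_mul2r h orbT. Qed.

Section Focus.
Variable k : nat.
Hypothesis IH : vdW_stmt k.
Variable T : finType.

Definition focused (chi : nat -> T) s N :=
  exists f, f < N /\ exists a d : nat -> nat,
    (forall i, i < s -> 0 < d i /\ a i + k.+1 * d i = f /\
        (forall j, j <= k -> chi (a i + j * d i) = chi (a i))) /\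
    (forall i i', i < s -> i' < s -> chi (a i) = chi (a i') -> i = i').

Lemma focus s : exists N, forall chi : nat -> T, mono_ap chi k.+1 N \/ focused chi s N.
Proof.
elim: s => [|s [Ns HNs]].
  exists 1 => chi; right; exists 0; split=> //; exists (fun _ => 0), (fun _ => 0).
  by split.
have [M HM] := IH {ffun 'I_Ns -> T}.
exists (Ns * (2 * M)) => chi.
pose chib b := [ffun o : 'I_Ns => chi (Ns * b + o)].
have [b [e [e0 [eM [bM Hb]]]]] := HM chib.
have Hbl : forall j o, j <= k -> o < Ns -> chi (Ns * (b + j * e) + o) = chi (Ns * b + o).
  move=> j o jk oN; have := congr1 (fun F : {ffun 'I_Ns -> T} => F (Ordinal oN)) (Hb j jk).
  by rewrite !ffunE.
have Mpos : 0 < M by lia.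
case: (HNs (fun x => chi (Ns * b + x))) => [[a' [d [d0 [dN [aN Ha]]]]]|].
  left; exists (Ns * b + a'), d; split => //; split; first by apply: leN.
  split; first by rewrite -addnA; apply: blkL; lia.
  by move=> j jk; rewrite -addnA Ha.
move=> [f' [fN [a' [d' [Hf Hinj]]]]].
pose F := Ns * b + f'.
case: (boolP [exists i : 'I_s, chi (Ns * b + a' i) == chi F]).
  move=> /existsP [i /eqP Hi].
  have [d0 [af Hj]] := Hf i (ltn_ord i).
  left; exists (Ns * b + a' i), (d' i); split => //.
  split; first by apply: leN => //; move: af; rewrite mulSn; lia.
  split; first by rewrite -addnA af; apply: blkL; lia.
  move=> j; rewrite leq_eqVlt ltnS => /orP [/eqP ->|jk].
    by rewrite -addnA af Hi.
  by rewrite -addnA Hj.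
move=> Hno.
right; exists (F + k.+1 * (Ns * e)); split; first by rewrite /F; apply: blkF; lia.
exists (fun i => if i < s then Ns * b + a' i else F).
exists (fun i => if i < s then d' i + Ns * e else Ns * e).
split.
  move=> i; rewrite ltnS leq_eqVlt => /orP [/eqP ->|iS]; first rewrite ltnn.
    split; first by rewrite muln_gt0 e0; lia.
    split => // j jk.
    have -> : F + j * (Ns * e) = Ns * (b + j * e) + f' by rewrite /F; ring.
    by rewrite Hbl.
  rewrite iS; have [d0 [af Hj]] := Hf i iS.
  split; first by rewrite addn_gt0 d0.
  split; first by rewrite /F -af; ring.
  move=> j jk.
  have -> : Ns * b + a' i + j * (d' i + Ns * e) = Ns * (b + j * e) + (a' i + j * d' i) by ring.
  rewrite Hbl //; first by rewrite Hj.
  have := apbnd (a' i) (d' i) (leqW jk); rewrite af => h; exact: leq_ltn_trans h fN.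
move=> i i' Hi Hi'.
case: (ltnP i s) => iS; case: (ltnP i' s) => iS'.
- exact: Hinj.
- have -> : i' = s by lia.
  move=> h; move/negP: Hno; case; apply/existsP; exists (Ordinal iS); by rewrite h.
- have -> : i = s by lia.
  move=> h; move/negP: Hno; case; apply/existsP; exists (Ordinal iS'); by rewrite -h.
- lia.
Qed.
End Focus.

Lemma vdW k : vdW_stmt k.
Proof.
elim: k => [|k IH]; first exact: vdW0.
move=> T; have [N HN] := focus IH T #|T|.
exists N => chi; case: (HN chi) => // [[f [fN [a [d [Hf Hinj]]]]]].
have [i iT hi] := inj_surj Hinj (chi f).
have [d0 [af Hj]] := Hf i iT.
exists (a i), (d i); split => //; split; first by move: af; rewrite mulSn; lia.
split; first by rewrite af.
move=> j; rewrite leq_eqVlt ltnS => /orP [/eqP ->|jk]; first by rewrite af hi.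
exact: Hj.
Qed.

Local Open Scope ring_scope.

Lemma pick_avoid (k : nat) (u v : 'I_k -> int) :
  exists2 tau : nat, (tau <= k)%N & forall j, v j != 0 -> u j + v j * tau%:Z != 0.
Proof.
pose bad j : 'I_k.+1 := odflt ord0 [pick t : 'I_k.+1 | u j + v j * (val t)%:Z == 0].
have : ~~ ([set: 'I_k.+1] \subset [set bad j | j in 'I_k]).
  apply/negP => /subset_leq_card; rewrite cardsT card_ord => H.
  by have := leq_trans H (leq_imset_card _ _); rewrite card_ord ltnn.
case/subsetPn => t _ tnot; exists (val t); first exact: ltn_ord t.
move=> j vj; apply/negP => /eqP h.
move/negP: tnot; case; apply/imsetP; exists j => //.
rewrite /bad; case: pickP => [t' /eqP h'|/(_ t)]; last by rewrite h eqxx.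
apply: val_inj => /=; apply/eqP; rewrite -(eqr_nat int); apply/eqP.
apply: (mulfI vj); rewrite !natz; apply: (addrI (u j)); by rewrite h h'.
Qed.

Lemma avoid (k r : nat) (B : 'I_k -> 'I_r -> int) (c : 'I_k -> int) :
  exists t : nat -> nat, (forall i, (t i <= k)%N) /\
    forall j, (exists i, B j i != 0) -> c j + \sum_(i < r) B j i * (t i)%:Z != 0.
Proof.
elim: r B => [|r IH] B.
  by exists (fun _ => 0%N); split => // j [[]].
have [t [tk Ht]] := IH (fun j i => B j (widen_ord (leqnSn r) i)).
have [tau tauk Htau] := pick_avoid (fun j => c j + \sum_(i < r) B j (widen_ord (leqnSn r) i) * (t i)%:Z)
   (fun j => B j ord_max).
exists (fun i => if (i == r)%N then tau else t i); split.
  by move=> i; case: ifP.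
move=> j [i Hi]; rewrite big_ord_recr /= eqxx.
rewrite (eq_bigr (fun i0 : 'I_r => B j (widen_ord (leqnSn r) i0) * (t i0)%:Z)); last first.
  by move=> i0 _ /=; rewrite ifN // neq_ltn ltn_ord.
case: (eqVneq (B j ord_max) 0) => Hm.
  rewrite Hm mul0r addr0; apply: Ht.
  have ir : (i < r)%N.
    rewrite ltn_neqAle -ltnS ltn_ord andbT; apply/negP => /eqP ir.
    have ei : i = ord_max by apply: val_inj.
    by move: Hi; rewrite ei Hm eqxx.
  exists (Ordinal ir); suff -> : widen_ord (leqnSn r) (Ordinal ir) = i by [].
  exact: val_inj.
by rewrite addrA; apply: Htau.
Qed.

Lemma int_scale (q : rat) (D Q : int) : 0 < q -> 0 < Q -> D = denq q * Q ->
  exists n : nat, (0 < n)%N /\ (n%:R : rat) = q * D%:~R.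
Proof.
move=> q0 Q0 ->; exists (absz (numq q * Q)).
have h : 0 < numq q * Q by rewrite mulr_gt0 // numq_gt0.
split; first by rewrite absz_gt0 gt_eqF.
rewrite natr_absz gtr0_norm // intrM numqE intrM; ring.
Qed.

Lemma ratios (n m' : nat) (a : 'I_n -> int) (c : 'M[rat]_m'.+1) :
  (forall i j : 'I_m'.+1, (i <= j)%N -> 0 < c i j /\ exists l : 'I_n, c i j = S_coef a l) ->
  linkage c ->
  exists Nf : 'I_m'.+2 -> nat, (forall j, 0 < Nf j)%N /\
    forall p q : 'I_m'.+2, (p < q)%N -> exists l : 'I_n, ((Nf q)%:R : rat) = S_coef a l * (Nf p)%:R.
Proof.
move=> Hc Hl.
pose tf (j : nat) : rat := if j == 0%N then 1 else c ord0 (inord j.-1).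
have tpos : forall j : 'I_m'.+2, 0 < tf j.
  move=> j; rewrite /tf; case: eqP => // _; by case: (Hc ord0 (inord j.-1) isT).
have trat : forall p q : 'I_m'.+2, (p < q)%N -> exists l, tf q = S_coef a l * tf p.
  move=> p q pq; rewrite /tf; have qn0 : (nat_of_ord q != 0)%N by rewrite -lt0n (leq_ltn_trans _ pq).
  rewrite (negPf qn0); case: eqP => [p0|/eqP pn0].
    have [_ [l hl]] := Hc ord0 (inord q.-1) isT; exists l; by rewrite hl mulr1.
  have qm : (q.-1 < m'.+1)%N by have := ltn_ord q; lia.
  have pm : (p.-1 < m'.+1)%N by have := ltn_ord q; lia.
  have pm2 : (p < m'.+1)%N by have := ltn_ord q; lia.
  have hpq : (@inord m' p <= @inord m' q.-1)%N by rewrite !inordK //; lia.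
  have [_ [l hl]] := Hc (inord p) (inord q.-1) hpq.
  exists l; rewrite -hl mulrC.
  symmetry; apply: Hl => /=; rewrite ?inordK //; lia.
pose D : int := \prod_(j < m'.+1) denq (c ord0 j).
have Dnat : forall j : 'I_m'.+2, exists nn : nat, (0 < nn)%N /\ (nn%:R : rat) = tf j * D%:~R.
  move=> j; rewrite /tf; case: eqP => [_|/eqP jn0].
    exists (absz D); have Dp : 0 < D by apply: prodr_gt0 => i _; exact: denq_gt0.
    split; first by rewrite absz_gt0 gt_eqF.
    by rewrite mul1r natr_absz gtr0_norm.
  apply: (@int_scale _ _ (\prod_(i < m'.+1 | i != inord j.-1) denq (c ord0 i))).
  - by case: (Hc ord0 (inord j.-1) isT).
  - by apply: prodr_gt0 => i _; exact: denq_gt0.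
  - by rewrite /D (bigD1 (inord j.-1)).
have [Nf HNf] := fin_all_exists Dnat.
exists Nf; split; first by move=> j; case: (HNf j).
move=> p q pq; have [l hl] := trat p q pq; exists l.
case: (HNf p) => _ ->; case: (HNf q) => _ ->; rewrite hl; ring.
Qed.

Lemma sum_expand (n : nat) (g t e : 'I_n -> int) (al be ga : int) :
  \sum_(i < n) g i * (al + (be * t i - ga * e i)) =
  al * \sum_(i < n) g i + be * \sum_(i < n) (g i * t i) - ga * \sum_(i < n) (g i * e i).
Proof.
rewrite !mulr_sumr -big_split -sumrB /=; apply: eq_bigr => i _; ring.
Qed.

Lemma sum_expand2 (n : nat) (g h t : 'I_n -> int) (de u v : int) :
  \sum_(i < n) de * (u * g i - v * h i) * t i =
  de * u * \sum_(i < n) (g i * t i) - de * v * \sum_(i < n) (h i * t i).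
Proof.
rewrite !mulr_sumr -sumrB; apply: eq_bigr => i _; ring.
Qed.

Lemma sum_delta (n : nat) (g : 'I_n -> int) (l : 'I_n) :
  \sum_(i < n) g i * (i == l)%:R = g l.
Proof.
rewrite (bigD1 l) //= eqxx mulr1 big1 ?addr0 // => i /negPf ->; by rewrite mulr0.
Qed.

Lemma sum_bound (n : nat) (F : 'I_n -> int) (K : int) :
  (forall i, `|F i| <= K) -> `|\sum_(i < n) F i| <= K *+ n.
Proof.
move=> h; apply: (le_trans (ler_norm_sum _ _ _)).
have -> : K *+ n = \sum_(i < n) K by rewrite sumr_const card_ord.
by apply: ler_sum => i _.
Qed.

Lemma term_le (n : nat) (F : 'I_n -> nat) i : (F i <= \sum_(j < n) F j)%N.
Proof. by rewrite (bigD1 i) //= leq_addr. Qed.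

Lemma core (n mm kk : nat) (a : 'I_n -> int) (Nf : 'I_mm.+1 -> nat)
  (A : 'I_kk -> 'I_n -> int) (col : nat -> 'I_mm) :
  (forall j, 0 < Nf j)%N ->
  (forall p q : 'I_mm.+1, (p < q)%N ->
     exists l : 'I_n, ((Nf q)%:R : rat) = S_coef a l * (Nf p)%:R) ->
  (forall i, a i != 0) ->
  (forall j, ~ is_multiple (A j) a) ->
  exists x : 'I_n -> nat, (forall i, 0 < x i)%N /\ (forall i j, col (x i) = col (x j)) /\
      lin_form a x = 0 /\ (forall j, lin_form (A j) x != 0).
Proof.
move=> Npos Hrat anz HA.
pose B : nat := ((\sum_(i < n) absz (a i)) * (\sum_(j < mm.+1) Nf j))%N.
pose R0 : nat := (n.+1 * B * kk)%N.
pose chi z := [ffun j : 'I_mm.+1 => col (Nf j * z)%N].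
have [N HN] := vdW (2 * R0) {ffun 'I_mm.+1 -> 'I_mm}.
have [a0 [dl [dl0 [_ [_ Hap]]]]] := HN (fun z => chi z.+1).
pose y := a0.+1.
have Hmono : forall (j : 'I_mm.+1) r, (r <= 2 * R0)%N ->
    col (Nf j * (y + r * dl))%N = col (Nf j * y)%N.
  move=> j r hr; have := congr1 (fun F : {ffun _ -> _} => F j) (Hap r hr).
  by rewrite !ffunE addSn.
have [p [q pq Hpq]] : exists p : 'I_mm.+1, exists2 q : 'I_mm.+1, (p < q)%N &
    col (Nf p * y)%N = col (Nf q * y)%N.
  have : ~~ injectiveb (fun j : 'I_mm.+1 => col (Nf j * y)%N).
    by apply/negP => /injectiveP/leq_card; rewrite !card_ord ltnn.
  case/injectivePn => p [q pnq hpq].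
  case: (ltngtP p q) => h.
  - by exists p, q.
  - by exists q, p.
  - by move: pnq; rewrite (val_inj h) eqxx.
have [l Hl] := Hrat p q pq.
pose Mn (i : 'I_n) : nat := if i == l then Nf q else Nf p.
pose b (i : 'I_n) : int := a i * (Mn i)%:Z.
have Sb : \sum_(i < n) b i = 0.
  rewrite (bigD1 l) //= /b /Mn eqxx.
  rewrite (eq_bigr (fun i => a i * (Nf p)%:Z)); last by move=> i /negPf ->.
  rewrite -mulr_suml.
  have Hs : \sum_(i < n) a i - a l = \sum_(i < n | i != l) a i.
    by rewrite (bigD1 l) //= addrAC subrr add0r.
  move: Hl; rewrite /S_coef Hs => Hl.
  have al0 : ((a l)%:~R : rat) != 0 by rewrite intr_eq0.
  apply: (@intr_inj rat); rewrite rmorph0 rmorphD !rmorphM /=.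
  rewrite -!pmulrn Hl; field => //.
pose g j i : int := A j i * (Mn i)%:Z.
have [t [tk Ht]] := avoid (fun j i => dl%:Z * (b l * g j i - g j l * b i))
   (fun j => (y%:Z + R0%:Z * dl%:Z) * \sum_(i < n) g j i).
pose Sbt := \sum_(i < n) b i * (t i)%:Z.
pose e (i : 'I_n) : int := (i == l)%:R.
pose w (i : 'I_n) := b l * (t i)%:Z - e i * Sbt.
have bB : forall i, `|b i| <= B%:Z.
  move=> i; rewrite /b normrM /B PoszM; apply: ler_pM => //.
    by rewrite -abszE lez_nat term_le.
  by rewrite ger0_norm // lez_nat /Mn; case: ifP => _; apply: term_le.
have wb : forall i, `|w i| <= R0%:Z.
  move=> i; rewrite /w.
  have h1 : `|b l * (t i)%:Z| <= (B * kk)%:Z.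
    by rewrite normrM PoszM; apply: ler_pM => //; rewrite ger0_norm // lez_nat tk.
  have h2 : `|Sbt| <= (n * (B * kk))%:Z.
    have -> : (n * (B * kk))%:Z = (B * kk)%:Z *+ n by rewrite -mulr_natr natz -PoszM mulnC.
    apply: sum_bound => i'; rewrite normrM PoszM; apply: ler_pM => //.
    by rewrite ger0_norm // lez_nat tk.
  have h3 : `|e i * Sbt| <= `|Sbt|.
    by rewrite normrM /e; case: (i == l); rewrite ?normr1 ?normr0 ?mul1r ?mul0r.
  have h4 : R0%:Z = (B * kk)%:Z + (n * (B * kk))%:Z.
    by rewrite -PoszD /R0; congr Posz; ring.
  apply: (le_trans (ler_normB _ _)); rewrite h4; lra.
pose r i := absz (R0%:Z + w i).
have rZ : forall i, (r i)%:Z = R0%:Z + w i.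
  move=> i; rewrite /r gez0_abs //; have := wb i; rewrite ler_norml; lra.
have r2 : forall i, (r i <= 2 * R0)%N.
  move=> i; rewrite -lez_nat rZ; have := wb i; rewrite ler_norml PoszM; lra.
exists (fun i => Mn i * (y + r i * dl))%N.
have xZ : forall i, ((Mn i * (y + r i * dl))%N)%:Z =
    (Mn i)%:Z * (y%:Z + (R0%:Z + w i) * dl%:Z).
  by move=> i; rewrite PoszM PoszD PoszM rZ.
have Sbe : forall F : 'I_n -> int, \sum_(i < n) F i * e i = F l by move=> F; apply: sum_delta.
split; [|split; [|split]].
- move=> i; rewrite muln_gt0 /Mn addn_gt0 /y ltn0Sn andbT; by case: ifP.
- suff h : forall i, col (Mn i * (y + r i * dl))%N = col (Nf p * y)%N.
    by move=> i j; rewrite !h.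
  move=> i; rewrite /Mn; case: ifP => _; rewrite Hmono //.
- rewrite /lin_form.
  rewrite (eq_bigr (fun i => b i * ((y%:Z + R0%:Z * dl%:Z) +
        (dl%:Z * b l * (t i)%:Z - dl%:Z * Sbt * e i)))); last first.
    by move=> i _ /=; rewrite xZ /w /b; ring.
  rewrite (sum_expand b (fun i => (t i)%:Z) e) Sbe Sb /Sbt; ring.
- move=> j; rewrite /lin_form.
  rewrite (eq_bigr (fun i => g j i * ((y%:Z + R0%:Z * dl%:Z) +
        (dl%:Z * b l * (t i)%:Z - dl%:Z * Sbt * e i)))); last first.
    by move=> i _ /=; rewrite xZ /w /g; ring.
  rewrite (sum_expand (g j) (fun i => (t i)%:Z) e) Sbe.
  have Hex : exists i, dl%:Z * (b l * g j i - g j l * b i) != 0.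
    case: (boolP [exists i, dl%:Z * (b l * g j i - g j l * b i) != 0]).
      by move/existsP.
    move/existsPn => Hn; exfalso; apply: (HA j).
    have al0 : ((a l)%:~R : rat) != 0 by rewrite intr_eq0.
    exists ((A j l)%:~R / (a l)%:~R) => i.
    have Mnz : forall i0, (Mn i0)%:Z != 0.
      by move=> i0; rewrite eqz_nat -lt0n /Mn; case: ifP.
    have e2 : a l * A j i = A j l * a i.
      apply: (mulIf (mulf_neq0 (Mnz l) (Mnz i))).
      move: (Hn i); rewrite negbK mulf_eq0 (negbTE (_ : dl%:Z != 0)) ?eqz_nat -?lt0n //= subr_eq0 => /eqP h.
      transitivity (b l * g j i); first by rewrite /b /g; ring.
      by rewrite h /b /g; ring.
    have e3 := congr1 (fun z : int => (z%:~R : rat)) e2; rewrite /= !intrM in e3.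
    apply: (mulfI al0); rewrite e3; field => //.
  have H := Ht j Hex.
  rewrite (sum_expand2 (g j) b (fun i => (t i)%:Z)) in H.
  move: H; rewrite /Sbt; apply: contra => /eqP h; apply/eqP; apply: (etrans _ h); ring.
Qed.

Theorem theorem3 (n m : nat) (a : 'I_n -> int) :
  (forall i, a i != 0) ->
  (exists c : 'M[rat]_m,
     upper_triangular c /\
     (forall i j : 'I_m, (i <= j)%N ->
        0 < c i j /\ exists l : 'I_n, c i j = S_coef a l) /\
     linkage c) ->
  strongly_m_regular m a.
Proof.
move=> anz [c [_ [Hc Hl]]] kk A HA col.
case: m c Hc Hl col => [|m'] c Hc Hl col; first by case: (col 0%N).
have [Nf [Npos Hrat]] := ratios Hc Hl.
exact: (core col Npos Hrat anz HA).
Qed.
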